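(* Let $N=2^h$ with $h\ge 2$, $\Delta,\varepsilon>0$, $\sigma^2=2\Delta^2/\varepsilon^2$ and $V(N)=2(\log_2N-1)$. Consider the binary tree mechanism $\mathcal{T}_{N,\Delta,\varepsilon}$ applied to a sequence $(y_t)_{t\ge1}$ of nonnegative reals, and let $I$ be a set of consecutive indices. (1) If $|I|\le N/2$, there is an estimator $\hat S(I)$, equal to a sum of released noisy tree-node values, with $\mathbb{E}[\hat S(I)]=\sum_{t\in I}y_t$ and $\mathrm{Var}[\hat S(I)]\le V(N)\,\sigma^2$. (2) If $|I|>N/2$, write $|I|=kN/2+R$ with integers $k\ge1$ and $0\le R<N/2$. Then there is such an estimator, equal to a sum of released noisy values (possibly from several containers), with $\mathbb{E}[\hat S(I)]=\sum_{t\in I}y_t$ and $\mathrm{Var}[\hat S(I)]\le (k+V(N))\,\sigma^2$.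
   Context: Binary tree mechanism with shadow releases $\mathcal{T}_{N,\Delta,\varepsilon}$ ($N=2^h$) on an input sequence $(y_t)_{t\ge1}$: indices are partitioned into containers $C_k=\{(k-1)N+1,\dots,kN\}$, $k=1,2,\dots$. For each container, build a complete binary tree $\mathcal{B}_N$ whose leaves are the indices of $C_k$ in order; a node $v$ at depth $d$ (root at depth $0$) corresponds to a block of $2^{h-d}$ consecutive leaves, and $\mathrm{sum}(v)=\sum_{t\in\mathrm{leaves}(v)}y_t$. The mechanism releases $\tilde s(v)=\mathrm{sum}(v)+\eta_v$ for every node $v$ of every container's tree, and for each container $k$ one shadow release $\sum_{t=(k-1)N+N/2+1}^{kN}y_t+\eta'_k$, where all $\eta_v,\eta'_k$ are independent $\mathrm{Lap}(\Delta/\varepsilon)$ random variables (each of variance $2\Delta^2/\varepsilon^2$). *)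

(* Defs.v *)
From HB Require Import structures.
From mathcomp Require Import all_boot all_order all_algebra.
From mathcomp Require Import all_classical all_reals all_analysis.
Set Implicit Arguments. Unset Strict Implicit. Unset Printing Implicit Defensive.
Import Order.TTheory GRing.Theory Num.Theory.
Local Open Scope ring_scope.

(* Labels of the values released by the binary tree mechanism with shadow
   releases T_{N,Delta,eps}, N = 2^h.
   - Node k d j : node of depth d (root = depth 0), j-th from the left
     (0 <= j < 2^d), in the tree of container k (k >= 1).
   - Shadow k   : the shadow release of container k (k >= 1). *)
Inductive release_label := Node of nat & nat & nat | Shadow of nat.

Definition label_valid (h : nat) (l : release_label) : bool :=
  match l with
  | Node k d j => [&& 0 < k, d <= h & j < 2 ^ d]
  | Shadow k => 0 < k
  end%N.

(* Underlying (noiseless) sum of a released value; indices t start at 1.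
   Container C_k = {(k-1)N+1, ..., kN}. *)
Definition label_sum {R : numDomainType} (h : nat) (y : nat -> R)
    (l : release_label) : R :=
  match l with
  | Node k d j =>
      let w := (2 ^ (h - d))%N in
      let s := ((k.-1) * 2 ^ h + j * w).+1%N in
      \sum_(s <= t < s + w) y t
  | Shadow k =>
      let s := ((k.-1) * 2 ^ h + (2 ^ h)./2).+1%N in
      \sum_(s <= t < s + (2 ^ h)./2) y t
  end.

Definition released {R : numDomainType} {T : Type} (h : nat) (y : nat -> R)
    (eta : release_label -> T -> R) (l : release_label) : T -> R :=
  fun w => label_sum h y l + eta l w.

Definition sum_released {R : numDomainType} {T : Type} (h : nat)
    (y : nat -> R) (eta : release_label -> T -> R) (L : seq release_label)
    : T -> R :=
  fun w => \sum_(l <- L) released h y eta l w.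

Definition label_enc (l : release_label) : (nat * nat * nat) + nat :=
  match l with Node k d j => inl (k, d, j) | Shadow k => inr k end.
Definition label_dec (x : (nat * nat * nat) + nat) : release_label :=
  match x with inl (k, d, j) => Node k d j | inr k => Shadow k end.
Lemma label_encK : cancel label_enc label_dec.
Proof. by case. Qed.
HB.instance Definition _ := Equality.copy release_label (can_type label_encK).

(* Main.v *)
Require Import Defs.
From HB Require Import structures.
From mathcomp Require Import all_boot all_order all_algebra.
From mathcomp Require Import all_classical all_reals all_analysis.
From mathcomp Require Import zify.
Import Order.TTheory GRing.Theory Num.Theory.
Set Implicit Arguments. Unset Strict Implicit. Unset Printing Implicit Defensive.
Local Open Scope nat_scope.

Fixpoint blocks (c b q : nat) : seq (nat * nat) :=
  if q is q'.+1 then (c, b) :: blocks (c + 2 ^ b) b q' else [::].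

Fixpoint pre (J c s : nat) : seq (nat * nat) :=
  match J with
  | 0 => blocks c 0 s
  | J'.+1 => let q := s %/ 2 ^ J'.+1 in
      blocks c J'.+1 q ++ pre J' (c + q * 2 ^ J'.+1) (s %% 2 ^ J'.+1)
  end.

Fixpoint suf (J c s : nat) : seq (nat * nat) :=
  match J with
  | 0 => blocks (c - s) 0 s
  | J'.+1 => let q := s %/ 2 ^ J'.+1 in
      suf J' (c - q * 2 ^ J'.+1) (s %% 2 ^ J'.+1) ++ blocks (c - q * 2 ^ J'.+1) J'.+1 q
  end.

Fixpoint tiles (lo hi : nat) (L : seq (nat * nat)) : bool :=
  match L with
  | [::] => lo == hi
  | x :: L' => (x.1 == lo) && tiles (x.1 + 2 ^ x.2) hi L'
  end.

Definition okb (J : nat) (x : nat * nat) := (x.2 <= J) && (2 ^ x.2 %| x.1).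

Lemma tiles_cat lo mid hi L1 L2 :
  tiles lo mid L1 -> tiles mid hi L2 -> tiles lo hi (L1 ++ L2).
Proof.
elim: L1 lo => [|x L1 IH] lo /=; first by move/eqP->.
by case/andP=> -> /IH H /H.
Qed.

Lemma tiles_le lo hi L : tiles lo hi L -> (lo <= hi) && all (fun x => lo <= x.1) L.
Proof.
elim: L lo => [|x L IH] lo /=; first by move/eqP->; rewrite leqnn.
case/andP=> /eqP -> /IH /andP[H1 H2]; rewrite leqnn /=.
apply/andP; split; first by apply: leq_trans H1; rewrite leq_addr.
apply/allP=> z zL; have := allP H2 z zL; apply: leq_trans; exact: leq_addr.
Qed.

Lemma tiles_uniq lo hi L : tiles lo hi L -> uniq (map fst L).
Proof.
elim: L lo => [|x L IH] lo //=.
case/andP=> /eqP xl T; rewrite (IH _ T) andbT.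
have /andP[_ A] := tiles_le T.
apply/mapP=> -[z zL ez]; have := allP A z zL; rewrite -ez.
have : 0 < 2 ^ x.2 by rewrite expn_gt0.
lia.
Qed.

Lemma tiles_blocks c b q : tiles c (c + q * 2 ^ b) (blocks c b q).
Proof.
elim: q c => [|q IH] c /=; first by rewrite addn0.
rewrite eqxx /=; have -> : c + q.+1 * 2 ^ b = c + 2 ^ b + q * 2 ^ b by rewrite mulSn addnA.
exact: IH.
Qed.

Lemma size_blocks c b q : size (blocks c b q) = q.
Proof. by elim: q c => //= q IH c; rewrite IH. Qed.

Lemma ok_blocks J c b q : b <= J -> 2 ^ b %| c -> all (okb J) (blocks c b q).
Proof.
move=> bJ; elim: q c => //= q IH c dc; rewrite /okb /= bJ dc /=.
by apply: IH; rewrite dvdn_add.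
Qed.

Lemma tiles_pre J c s : tiles c (c + s) (pre J c s).
Proof.
elim: J c s => [|J IH] c s /=.
  by have := tiles_blocks c 0 s; rewrite expn0 muln1.
apply: tiles_cat (tiles_blocks _ _ _) _.
by have := IH (c + s %/ 2 ^ J.+1 * 2 ^ J.+1) (s %% 2 ^ J.+1); rewrite -addnA -divn_eq.
Qed.

Lemma tiles_suf J c s : s <= c -> tiles (c - s) c (suf J c s).
Proof.
elim: J c s => [|J IH] c s sc /=.
  by have := tiles_blocks (c - s) 0 s; rewrite expn0 muln1 subnK.
set B := 2 ^ J.+1; set q := s %/ B; set r := s %% B.
have es : s = q * B + r by exact: divn_eq.
apply: (@tiles_cat _ (c - q * B)).
  have -> : c - s = c - q * B - r by lia.
  apply: IH; lia.
by have := tiles_blocks (c - q * B) J.+1 q; rewrite subnK //; lia.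
Qed.

Lemma ok_pre J c s : 2 ^ J %| c -> all (okb J) (pre J c s).
Proof.
elim: J c s => [|J IH] c s /= dc; first by apply: ok_blocks.
rewrite all_cat ok_blocks //=.
have dJ : 2 ^ J %| 2 ^ J.+1 by rewrite dvdn_exp2l.
have := IH (c + s %/ 2 ^ J.+1 * 2 ^ J.+1) (s %% 2 ^ J.+1).
rewrite dvdn_add ?(dvdn_trans dJ) ?dvdn_mull // => /(_ isT) H.
apply/allP=> x /(allP H); rewrite /okb => /andP[H1 ->]; rewrite andbT; lia.
Qed.

Lemma ok_suf J c s : 2 ^ J %| c -> all (okb J) (suf J c s).
Proof.
elim: J c s => [|J IH] c s /= dc; first by apply: ok_blocks => //; rewrite dvd1n.
have dJ : 2 ^ J %| 2 ^ J.+1 by rewrite dvdn_exp2l.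
have dq : 2 ^ J.+1 %| c - s %/ 2 ^ J.+1 * 2 ^ J.+1 by rewrite dvdn_sub ?dvdn_mull.
rewrite all_cat ok_blocks // andbT.
have := IH (c - s %/ 2 ^ J.+1 * 2 ^ J.+1) (s %% 2 ^ J.+1) (dvdn_trans dJ dq).
move=> H; apply/allP=> x /(allP H); rewrite /okb => /andP[H1 ->]; rewrite andbT; lia.
Qed.

Lemma mod_div_le1 s J : s %% 2 ^ J.+1 %/ 2 ^ J <= 1.
Proof.
by rewrite -ltnS ltn_divLR ?expn_gt0 // -expnS ltn_pmod // expn_gt0.
Qed.

Lemma size_pre J c s : size (pre J c s) <= s %/ 2 ^ J + J.
Proof.
elim: J c s => [|J IH] c s /=; first by rewrite size_blocks expn0 divn1 addn0.
rewrite size_cat size_blocks.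
have := IH (c + s %/ 2 ^ J.+1 * 2 ^ J.+1) (s %% 2 ^ J.+1).
have := mod_div_le1 s J; lia.
Qed.

Lemma size_suf J c s : size (suf J c s) <= s %/ 2 ^ J + J.
Proof.
elim: J c s => [|J IH] c s /=; first by rewrite size_blocks expn0 divn1 addn0.
rewrite size_cat size_blocks.
have := IH (c - s %/ 2 ^ J.+1 * 2 ^ J.+1) (s %% 2 ^ J.+1).
have := mod_div_le1 s J; lia.
Qed.

Lemma size_pre_le J c s : s <= 2 ^ J -> size (pre J c s) <= maxn J 1.
Proof.
case: J => [|J] /= sJ; first by rewrite size_blocks; rewrite expn0 in sJ; lia.
rewrite size_cat size_blocks.
have := size_pre J (c + s %/ 2 ^ J.+1 * 2 ^ J.+1) (s %% 2 ^ J.+1).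
have := mod_div_le1 s J.
have P0 : 0 < 2 ^ J.+1 by rewrite expn_gt0.
case: (ltnP s (2 ^ J.+1)) => hs.
  by rewrite (divn_small hs) (modn_small hs); lia.
have -> : s = 2 ^ J.+1 by apply/eqP; rewrite eqn_leq sJ hs.
rewrite divnn P0 modnn div0n; lia.
Qed.

Lemma size_suf_le J c s : s <= 2 ^ J -> size (suf J c s) <= maxn J 1.
Proof.
case: J => [|J] /= sJ; first by rewrite size_blocks; rewrite expn0 in sJ; lia.
rewrite size_cat size_blocks.
have := size_suf J (c - s %/ 2 ^ J.+1 * 2 ^ J.+1) (s %% 2 ^ J.+1).
have := mod_div_le1 s J.
have P0 : 0 < 2 ^ J.+1 by rewrite expn_gt0.
case: (ltnP s (2 ^ J.+1)) => hs.
  by rewrite (divn_small hs) (modn_small hs); lia.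
have -> : s = 2 ^ J.+1 by apply/eqP; rewrite eqn_leq sJ hs.
rewrite divnn P0 modnn div0n; lia.
Qed.

Lemma ceil_mult B u : 0 < B -> exists c, B %| c /\ u <= c < u + B.
Proof.
move=> B0; case: (boolP (B %| u)) => du; first by exists u; split => //; rewrite leqnn /= -{1}(addn0 u) ltn_add2l.
exists ((u %/ B).+1 * B); rewrite dvdn_mull //.
have := divn_eq u B; have := ltn_pmod u B0.
have : u %% B != 0 by exact: du.
rewrite mulSn; move: (u %/ B * B) (u %% B) => x y; lia.
Qed.

Lemma find_split J u v : u <= v -> v - u <= 2 ^ J ->
  exists J' c, [/\ J' <= J, 2 ^ J' %| c, u <= c <= v, c - u <= 2 ^ J' & v - c <= 2 ^ J'].
Proof.
elim: J u v => [|J IH] u v uv.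
  move=> h1; exists 0, u; rewrite expn0 in h1 *; split; rewrite ?dvd1n //; lia.
move=> hv.
have P0 : 0 < 2 ^ J by rewrite expn_gt0.
have [c2 [d2 /andP[h1 h2]]] := ceil_mult u (expn_gt0 2 J.+1).
have E : 2 ^ J.+1 = 2 ^ J + 2 ^ J by rewrite expnS mul2n addnn.
case: (leqP c2 v) => c2v.
  exists J.+1, c2; split => //; first by rewrite h1.
  - rewrite E in h2 *; lia.
  - rewrite E in hv *; lia.
have dmd : 2 ^ J %| c2 - 2 ^ J.
  by rewrite dvdn_sub // (dvdn_trans _ d2) // dvdn_exp2l.
case: (leqP u (c2 - 2 ^ J)) => h3; case: (leqP (c2 - 2 ^ J) v) => h4.
- exists J, (c2 - 2 ^ J); split => //; first by rewrite h3 h4.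
  + rewrite E in h2; lia.
  + lia.
- have [J' [c [? ? ? ? ?]]] := IH u v uv ltac:(rewrite E in h2; lia).
  by exists J', c; split => //; lia.
- have [J' [c [? ? ? ? ?]]] := IH u v uv ltac:(lia).
  by exists J', c; split => //; lia.
- lia.
Qed.

Definition lab (h : nat) (x : nat * nat) : release_label :=
  Node (x.1 %/ 2 ^ h).+1 (h - x.2) (x.1 %% 2 ^ h %/ 2 ^ x.2).
Definition st (h : nat) (l : release_label) : nat :=
  if l is Node k d j then k.-1 * 2 ^ h + j * 2 ^ (h - d) else 0.

Lemma lab_aux h x : okb h x -> x.1 %% 2 ^ h %/ 2 ^ x.2 * 2 ^ (h - (h - x.2)) = x.1 %% 2 ^ h.
Proof.
case/andP=> bh dv; rewrite subKn // divnK //.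
by rewrite /dvdn modn_dvdm ?dvdn_exp2l.
Qed.

Lemma lab_valid h x : okb h x -> label_valid h (lab h x).
Proof.
move=> ok; have /andP[bh _] := ok; rewrite /= leq_subr /=.
rewrite ltn_divLR ?expn_gt0 // -expnD subnK // ltn_pmod // expn_gt0 //.
Qed.

Lemma lab_st h x : okb h x -> st h (lab h x) = x.1.
Proof. by move=> ok; rewrite /= lab_aux // -divn_eq. Qed.

Local Open Scope ring_scope.

Definition Isum {R : numDomainType} (y : nat -> R) (lo hi : nat) : R :=
  \sum_(lo.+1 <= t < hi.+1) y t.

Lemma lab_sum {R : numDomainType} h (y : nat -> R) x : okb h x ->
  label_sum h y (lab h x) = Isum y x.1 (x.1 + 2 ^ x.2)%N.
Proof.
move=> ok; have /andP[bh _] := ok.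
by rewrite /label_sum /Isum /= lab_aux // -divn_eq subKn // addSn.
Qed.

Lemma Isum_cat {R : numDomainType} (y : nat -> R) lo mid hi :
  (lo <= mid)%N -> (mid <= hi)%N -> Isum y lo mid + Isum y mid hi = Isum y lo hi.
Proof. by move=> h1 h2; rewrite /Isum -big_cat_nat. Qed.

Lemma tiles_sum {R : numDomainType} (y : nat -> R) lo hi L : tiles lo hi L ->
  \sum_(x <- L) Isum y x.1 (x.1 + 2 ^ x.2)%N = Isum y lo hi.
Proof.
elim: L lo => [|x L IH] lo /=.
  by move/eqP->; rewrite big_nil /Isum big_geq.
case/andP=> /eqP e T; rewrite big_cons (IH _ T) e Isum_cat //.
  by rewrite leq_addr.
by have /andP[] := tiles_le T; rewrite e.
Qed.


Lemma okb_mono J J' x : (J <= J')%N -> okb J x -> okb J' x.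
Proof. by move=> JJ /andP[h1 h2]; rewrite /okb h2 andbT (leq_trans h1 JJ). Qed.

Lemma all_okb_mono J J' L : (J <= J')%N -> all (okb J) L -> all (okb J') L.
Proof. by move=> JJ /allP H; apply/allP => x /H; apply: okb_mono. Qed.

Lemma cov_sum0 (d : measure_display) (T : measurableType d) (R : realType)
  (P : probability T R) (eta : release_label -> T -> R) l L :
  (forall l, eta l \in Lfun P 2%:E) ->
  (forall l l', l <> l' -> covariance P (eta l) (eta l') = 0%E) ->
  l \notin L -> covariance P (eta l) (\sum_(l' <- L) eta l') = 0%E.
Proof.
move=> H2 Hc; elim: L => [|l' L IH] /=.
  by rewrite big_nil => _; exact: covariance_cst_r.
rewrite inE negb_or => /andP[ll lL].
rewrite big_cons covarianceDr ?rpred_sum ?lee1n // (IH lL) Hc ?adde0 //.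
by move=> e; rewrite e eqxx in ll.
Qed.

Lemma var_sum (d : measure_display) (T : measurableType d) (R : realType)
  (P : probability T R) (eta : release_label -> T -> R) (s2 : R) L :
  (forall l, eta l \in Lfun P 2%:E) ->
  (forall l, 'V_P[eta l] = s2%:E) ->
  (forall l l', l <> l' -> covariance P (eta l) (eta l') = 0%E) ->
  uniq L -> 'V_P[\sum_(l <- L) eta l] = ((size L)%:R * s2)%:E.
Proof.
move=> H2 HV Hc; elim: L => [|l L IH] /=.
  by rewrite big_nil mul0r => _; exact: variance_cst.
case/andP=> lL uL; rewrite big_cons varianceD ?rpred_sum ?lee1n // (IH uL) HV.
rewrite cov_sum0 // mule0 adde0 -EFinD; congr EFin.
by rewrite -[in RHS]natr1 mulrDl mul1r addrC.
Qed.

Lemma gen (d : measure_display) (T : measurableType d) (R : realType)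
  (P : probability T R) (h : nat) (s2 : R) (y : nat -> R)
  (eta : release_label -> T -> R) (L0 : seq (nat * nat)) (u v : nat) :
  (forall l, eta l \in Lfun P 2%:E) ->
  (forall l, ('E_P[eta l] = 0)%E) ->
  (forall l, 'V_P[eta l] = s2%:E) ->
  (forall l l', l <> l' -> covariance P (eta l) (eta l') = 0%E) ->
  tiles u v L0 -> all (okb h) L0 ->
  [/\ uniq (map (lab h) L0), all (label_valid h) (map (lab h) L0),
      all (fun l => if l is Node _ _ _ then true else false) (map (lab h) L0),
      ('E_P[sum_released h y eta (map (lab h) L0)] = (Isum y u v)%:E)%E
    & 'V_P[sum_released h y eta (map (lab h) L0)] = ((size L0)%:R * s2)%:E].
Proof.
move=> H2 HE HV Hc ti ok.
set L := map (lab h) L0.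
have uL : uniq L.
  apply: (@map_uniq _ _ (st h)); rewrite /L -map_comp.
  have -> : map (st h \o lab h) L0 = map fst L0.
    by apply/eq_in_map => x /(allP ok) /lab_st.
  exact: tiles_uniq ti.
set c := \sum_(l <- L) label_sum h y l.
set S := \sum_(l <- L) eta l.
have Hf : sum_released h y eta L = (cst c \+ S)%R.
  apply/funext => w; rewrite /sum_released /released big_split /=.
  by rewrite /S fct_sumE.
have S2 : S \in Lfun P 2%:E by rewrite rpred_sum ?lee1n // => l _; exact: H2.
have Pfin : P setT \is a fin_num := fin_num_measure P _ measurableT.
have S1 := Lfun_subset12 Pfin S2.
have Hc0 : c = Isum y u v.
  rewrite /c /L big_map -(tiles_sum y ti); apply: eq_big_seq => x xL.
  by apply: lab_sum; apply: (allP ok).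
split => //.
- by rewrite all_map; apply/allP => x /(allP ok) /lab_valid.
- by rewrite all_map; apply/allP => x.
- rewrite Hf expectationD ?Lfun_cst // expectation_cst -Hc0.
  rewrite /S -(big_map eta xpredT id) expectation_sum; last first.
    by move=> X /mapP[l _ ->]; have := Lfun_subset12 Pfin (H2 l).
  by rewrite big_map big1 ?adde0 // => l _; rewrite HE.
- by rewrite Hf varianceD_cst_l // /S (var_sum (s2:=s2)) // size_map.
Qed.

Theorem mainTheorem3 (d : measure_display) (T : measurableType d)
  (R : realType) (P : probability T R)
  (h : nat) (Delta eps : R) (y : nat -> R)
  (eta : release_label -> T -> R)
  (a m : nat) :
  (2 <= h)%N -> 0 < Delta -> 0 < eps ->
  (forall t, (1 <= t)%N -> 0 <= y t) ->
  (* the noises: measurable, square integrable, centered, of variance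
     sigma^2 = 2 Delta^2 / eps^2, and pairwise uncorrelated (as independent
     Lap(Delta/eps) variables are) *)
  (forall l, measurable_fun setT (eta l)) ->
  (forall l, eta l \in Lfun P 2%:E) ->
  (forall l, ('E_P[eta l] = 0)%E) ->
  (forall l, 'V_P[eta l] = (2 * Delta ^+ 2 / eps ^+ 2)%:E) ->
  (forall l l', l <> l' -> covariance P (eta l) (eta l') = 0%E) ->
  (* I = {a, ..., a + m - 1}, a set of consecutive indices *)
  (1 <= a)%N ->
  ((m <= (2 ^ h)./2)%N ->
     exists L : seq release_label,
       [/\ uniq L, all (label_valid h) L,
           all (fun l => if l is Node _ _ _ then true else false) L,
           ('E_P[sum_released h y eta L] = (\sum_(a <= t < a + m) y t)%:E)%E
         & ('V_P[sum_released h y eta L]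
             <= ((2 * (h - 1)%N)%:R * (2 * Delta ^+ 2 / eps ^+ 2))%:E)%E])
  /\
  (forall k r : nat, ((2 ^ h)./2 < m)%N -> m = (k * (2 ^ h)./2 + r)%N ->
     (1 <= k)%N -> (r < (2 ^ h)./2)%N ->
     exists L : seq release_label,
       [/\ uniq L, all (label_valid h) L,
           ('E_P[sum_released h y eta L] = (\sum_(a <= t < a + m) y t)%:E)%E
         & ('V_P[sum_released h y eta L]
             <= ((k + 2 * (h - 1))%N%:R * (2 * Delta ^+ 2 / eps ^+ 2))%:E)%E]).
Proof.
move=> h2 D0 e0 y0 Hm H2 HE HV Hc a1.
set s2 := 2 * Delta ^+ 2 / eps ^+ 2.
have Hhalf : ((2 ^ h)./2 = 2 ^ (h - 1))%N.
  have {1}-> : h = (h - 1).+1 by lia.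
  by rewrite expnS mul2n doubleK.
set u := a.-1.
have Iuv : forall m, Isum y u (u + m) = \sum_(a <= t < a + m) y t.
  by move=> m'; rewrite /Isum -addSn /u prednK.
have s20 : 0 <= s2 by apply: divr_ge0; [apply: mulr_ge0 => //; exact: sqr_ge0 | exact: sqr_ge0].
have Vb : forall n n', (n <= n')%N -> ((n%:R * s2)%:E <= (n'%:R * s2)%:E)%E.
  by move=> n n1 nn; rewrite lee_fin; apply: ler_wpM2r => //; rewrite ler_nat.
have hh : (h - 1 <= h)%N by rewrite leq_subr.
split.
- move=> mH; rewrite Hhalf in mH.
  have uv : (u <= u + m)%N by rewrite leq_addr.
  have hv : (u + m - u <= 2 ^ (h - 1))%N by rewrite addKn.
  have [J' [c [JJ dc /andP[uc cv] cu vc]]] := find_split uv hv.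
  set L0 := suf J' c (c - u) ++ pre J' c (u + m - c).
  have ti : tiles u (u + m) L0.
    apply: (@tiles_cat _ c).
      by have := tiles_suf J' (leq_subr u c); rewrite subKn.
    by have := tiles_pre J' c (u + m - c); rewrite subnKC.
  have ok : all (okb h) L0.
    rewrite all_cat; apply/andP; split; apply: (@all_okb_mono J');
      rewrite ?(leq_trans JJ hh) //; [exact: ok_suf | exact: ok_pre].
  have sz : (size L0 <= 2 * (h - 1))%N.
    rewrite size_cat.
    have := size_suf_le (J:=J') c cu; have := size_pre_le (J:=J') c vc; lia.
  have [U Va N E Var] := gen y H2 HE HV Hc ti ok.
  exists (map (lab h) L0); split => //; first by rewrite E Iuv.
  by rewrite Var; apply: Vb.
- move=> k r mH em k1 rH; rewrite Hhalf in mH em rH.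
  have H0 : (0 < 2 ^ (h - 1))%N by rewrite expn_gt0.
  have [c [dc /andP[uc cu]]] := ceil_mult u H0.
  set L0 := suf (h - 1) c (c - u) ++ pre (h - 1) c (u + m - c).
  have cv : (c <= u + m)%N by lia.
  have ti : tiles u (u + m) L0.
    apply: (@tiles_cat _ c).
      by have := tiles_suf (h - 1) (leq_subr u c); rewrite subKn.
    by have := tiles_pre (h - 1) c (u + m - c); rewrite subnKC.
  have ok : all (okb h) L0.
    rewrite all_cat; apply/andP; split; apply: (@all_okb_mono (h - 1)) => //;
      [exact: ok_suf | exact: ok_pre].
  have q1 : ((c - u) %/ 2 ^ (h - 1) = 0)%N by rewrite divn_small //; lia.
  have q2 : ((u + m - c) %/ 2 ^ (h - 1) <= k)%N.
    have -> : k = (m %/ 2 ^ (h - 1))%N by rewrite em divnMDl // divn_small // addn0.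
    by apply: leq_div2r; lia.
  have sz : (size L0 <= k + 2 * (h - 1))%N.
    rewrite size_cat.
    have := size_suf (h - 1) c (c - u); have := size_pre (h - 1) c (u + m - c).
    lia.
  have [U Va N E Var] := gen y H2 HE HV Hc ti ok.
  exists (map (lab h) L0); split => //; first by rewrite E Iuv.
  by rewrite Var; apply: Vb.
Qed.
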